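(* Let $X$ be a topological space. The following are equivalent: (1) $\tau_\omega=\tau_\Gamma$ on $C(X)$; (2) for every $\epsilon\in LSC(X,(0,1))$ there is a continuous $\eta:X\to(0,1)$ with $\eta(x)\le\epsilon(x)$ for every $x\in X$.
   Context: $C(X)$ is the set of continuous real-valued functions on $X$, each identified with its graph in $X\times\mathbb{R}$. The graph topology $\tau_\Gamma$ on $C(X)$ has base $\{F_G: G\text{ open in }X\times\mathbb{R}\}$ where $F_G=\{f\in C(X): f\subset G\}$. $LSC(X,(0,1))$ is the set of lower semicontinuous functions $X\to(0,1)$. The fine (Whitney) topology $\tau_\omega$ on $C(X)$ is the topology with base consisting of all sets $\{g\in C(X): |f(x)-g(x)|<\eta(x)\ \forall x\in X\}$, where $f\in C(X)$ and $\eta:X\to(0,1)$ is continuous. *)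

(* Defs.v *)
From Stdlib Require Import Reals.
Open Scope R_scope.

Record topology (X : Type) := {
  is_open : (X -> Prop) -> Prop;
  open_full : is_open (fun _ => True);
  open_inter : forall U V, is_open U -> is_open V -> is_open (fun x => U x /\ V x);
  open_union : forall F : (X -> Prop) -> Prop,
      (forall U, F U -> is_open U) -> is_open (fun x => exists U, F U /\ U x)
}.
Arguments is_open {X} t U.

Definition R_open (V : R -> Prop) : Prop :=
  forall t, V t -> exists r, 0 < r /\ forall s, Rabs (s - t) < r -> V s.

Definition prod_open {X : Type} (T : topology X) (G : X -> R -> Prop) : Prop :=
  forall x t, G x t -> exists U r, is_open T U /\ U x /\ 0 < r /\
    forall y s, U y -> Rabs (s - t) < r -> G y s.

Definition continuous {X : Type} (T : topology X) (f : X -> R) : Prop :=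
  forall V, R_open V -> is_open T (fun x => V (f x)).

Definition lsc {X : Type} (T : topology X) (f : X -> R) : Prop :=
  forall t, is_open T (fun x => t < f x).

(* Subsets of C(X) are represented as predicates on X -> R; only their
   values on continuous functions matter. *)

(* Graph topology tau_Gamma: W is open iff every f in W (f in C(X)) lies in
   some basic set F_G = {g in C(X) | g subset G} contained in W, G open in X x R. *)
Definition graph_open {X : Type} (T : topology X) (W : (X -> R) -> Prop) : Prop :=
  forall f, continuous T f -> W f ->
    exists G, prod_open T G /\ (forall x, G x (f x)) /\
      forall g, continuous T g -> (forall x, G x (g x)) -> W g.

(* Fine (Whitney) topology tau_omega: base sets
   B(h, eta) = {g in C(X) | forall x, |h x - g x| < eta x},
   h in C(X), eta : X -> (0,1) continuous. *)
Definition fine_open {X : Type} (T : topology X) (W : (X -> R) -> Prop) : Prop :=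
  forall f, continuous T f -> W f ->
    exists h eta, continuous T h /\ continuous T eta /\
      (forall x, 0 < eta x < 1) /\
      (forall x, Rabs (h x - f x) < eta x) /\
      forall g, continuous T g -> (forall x, Rabs (h x - g x) < eta x) -> W g.

(* Main.v *)
Require Import Defs.
From Stdlib Require Import Reals Lra Classical FunctionalExtensionality PropExtensionality.
Open Scope R_scope.

Ltac rabs := repeat split_Rabs; lra.

Lemma open_ext {X} (T : topology X) (P Q : X -> Prop) :
  (forall x, P x <-> Q x) -> is_open T P -> is_open T Q.
Proof.
  intros H HP. replace Q with P; auto.
  apply functional_extensionality; intro x; apply propositional_extensionality; auto.
Qed.

Lemma open_local {X} (T : topology X) (P : X -> Prop) :
  (forall x, P x -> exists U, is_open T U /\ U x /\ forall y, U y -> P y) -> is_open T P.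
Proof.
  intros H.
  apply (open_ext T (fun x => exists U, (is_open T U /\ forall y, U y -> P y) /\ U x)).
  - intro x; split.
    + intros [U [[_ HU] Ux]]; auto.
    + intros Px; destruct (H x Px) as [U [HU [Ux HU']]]; exists U; auto.
  - apply open_union. intros U [HU _]; exact HU.
Qed.

Lemma cont_ball {X} (T : topology X) f : continuous T f ->
  forall x r, 0 < r -> exists U, is_open T U /\ U x /\ forall y, U y -> Rabs (f y - f x) < r.
Proof.
  intros Hf x r Hr. exists (fun y => Rabs (f y - f x) < r). split; [|split].
  - apply (Hf (fun s => Rabs (s - f x) < r)). intros t Ht.
    exists (r - Rabs (t - f x)); split; [lra|]. intros s Hs. rabs.
  - rabs.
  - auto.
Qed.

Lemma cont_of_ball {X} (T : topology X) f :
  (forall x r, 0 < r -> exists U, is_open T U /\ U x /\ forall y, U y -> Rabs (f y - f x) < r)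
  -> continuous T f.
Proof.
  intros H V HV. apply open_local. intros x Vx.
  destruct (HV _ Vx) as [r [Hr Hs]].
  destruct (H x r Hr) as [U [HU [Ux HU']]]. exists U; repeat split; auto.
Qed.

Lemma cont_const {X} (T : topology X) c : continuous T (fun _ => c).
Proof.
  apply cont_of_ball. intros x r Hr. exists (fun _ => True). split; [apply open_full|].
  split; auto. intros; rabs.
Qed.

Lemma cont_plus {X} (T : topology X) f g : continuous T f -> continuous T g ->
  continuous T (fun x => f x + g x).
Proof.
  intros Hf Hg. apply cont_of_ball. intros x r Hr.
  destruct (cont_ball T f Hf x (r/2)) as [U1 [H1 [U1x H1']]]; [lra|].
  destruct (cont_ball T g Hg x (r/2)) as [U2 [H2 [U2x H2']]]; [lra|].
  exists (fun y => U1 y /\ U2 y). split; [apply open_inter; auto|]. split; auto.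
  intros y [a b]. specialize (H1' y a). specialize (H2' y b). rabs.
Qed.

Lemma cont_scal {X} (T : topology X) c f : continuous T f ->
  continuous T (fun x => c * f x).
Proof.
  intros Hf. apply cont_of_ball. intros x r Hr.
  assert (Hc : 0 < Rabs c + 1) by (pose proof (Rabs_pos c); lra).
  destruct (cont_ball T f Hf x (r / (Rabs c + 1))) as [U [H1 [Ux H1']]].
  { apply Rdiv_lt_0_compat; lra. }
  exists U; repeat split; auto. intros y Uy. specialize (H1' y Uy).
  replace (c * f y - c * f x) with (c * (f y - f x)) by ring.
  rewrite Rabs_mult.
  apply Rle_lt_trans with ((Rabs c + 1) * Rabs (f y - f x)).
  - apply Rmult_le_compat_r; [apply Rabs_pos|lra].
  - apply Rmult_lt_reg_l with (/ (Rabs c + 1)).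
    + apply Rinv_0_lt_compat; lra.
    + rewrite <- Rmult_assoc, Rinv_l by lra. unfold Rdiv in H1'. lra.
Qed.

Lemma fine_graph {X} (T : topology X) W : fine_open T W -> graph_open T W.
Proof.
  intros Hw f Hf Wf. destruct (Hw f Hf Wf) as [h [eta [Hh [He [Hb [Hhf HB]]]]]].
  exists (fun x s => Rabs (h x - s) < eta x). split; [|split; auto].
  intros x t Hxt. set (d := eta x - Rabs (h x - t)).
  destruct (cont_ball T h Hh x (d/3)) as [U1 [H1 [U1x H1']]]; [unfold d; lra|].
  destruct (cont_ball T eta He x (d/3)) as [U2 [H2 [U2x H2']]]; [unfold d; lra|].
  exists (fun y => U1 y /\ U2 y), (d/3). split; [apply open_inter; auto|].
  split; auto. split; [unfold d; lra|].
  intros y s [a b] Hs. specialize (H1' y a). specialize (H2' y b). unfold d in *. rabs.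
Qed.

Lemma graph_fine {X} (T : topology X) W :
  (forall eps : X -> R, lsc T eps -> (forall x, 0 < eps x < 1) ->
     exists eta : X -> R, continuous T eta /\ (forall x, 0 < eta x < 1) /\
       forall x, eta x <= eps x) ->
  graph_open T W -> fine_open T W.
Proof.
  intros H2 Hw f Hf Wf. destruct (Hw f Hf Wf) as [G [HG [Gf HW]]].
  set (S := fun x r => 0 < r /\ r <= 1/2 /\ exists U, is_open T U /\ U x /\
             forall y s, U y -> Rabs (s - f y) < r -> G y s).
  assert (Hbd : forall x, bound (S x)).
  { intro x; exists (1/2). intros r [_ [Hr _]]; auto. }
  assert (Hne : forall x, exists r, S x r).
  { intro x. destruct (HG x (f x) (Gf x)) as [U0 [r0 [HU0 [U0x [Hr0 H0]]]]].
    destruct (cont_ball T f Hf x (r0/2)) as [U1 [H1 [U1x H1']]]; [lra|].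
    exists (Rmin (r0/2) (1/2)). split; [apply Rmin_pos; lra|].
    split; [apply Rmin_r|].
    exists (fun y => U0 y /\ U1 y). split; [apply open_inter; auto|]. split; auto.
    intros y s [a b] Hs. apply H0; auto. specialize (H1' y b).
    pose proof (Rmin_l (r0/2) (1/2)). rabs. }
  set (eps := fun x => proj1_sig (completeness (S x) (Hbd x) (Hne x))).
  assert (Hlub : forall x, is_lub (S x) (eps x)).
  { intro x. unfold eps. destruct (completeness (S x) (Hbd x) (Hne x)); auto. }
  assert (Hup : forall x r, S x r -> r <= eps x).
  { intros x r Hr. apply (proj1 (Hlub x)); auto. }
  assert (Happ : forall x t, t < eps x -> exists r, S x r /\ t < r).
  { intros x t Ht. apply NNPP. intro Hn.
    assert (is_upper_bound (S x) t).
    { intros r Hr. apply Rnot_lt_le. intro Hlt. apply Hn. exists r; auto. }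
    pose proof (proj2 (Hlub x) t H). lra. }
  assert (Hlsc : lsc T eps).
  { intro t. apply open_local. intros x Hx.
    destruct (Happ x t Hx) as [r [[Hr0 [Hr1 [U [HU [Ux HUG]]]]] Htr]].
    exists U. repeat split; auto. intros y Uy.
    assert (S y r) by (split; auto; split; auto; exists U; auto).
    pose proof (Hup y r H). lra. }
  assert (Hrange : forall x, 0 < eps x < 1).
  { intro x. destruct (Hne x) as [r Hr]. pose proof (Hup x r Hr).
    assert (eps x <= 1/2).
    { apply (proj2 (Hlub x)). intros r' [_ [Hr' _]]; auto. }
    destruct Hr as [Hr0 _]. lra. }
  destruct (H2 eps Hlsc Hrange) as [eta [He [Hb Hle]]].
  exists f, eta. split; auto. split; auto. split; auto.
  split. { intro x. replace (f x - f x) with 0 by ring. rewrite Rabs_R0. apply Hb. }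
  intros g Hg Hfg. apply HW; auto. intro x.
  specialize (Hfg x). specialize (Hle x).
  destruct (Happ x (Rabs (f x - g x))) as [r [[_ [_ [U [_ [Ux HU]]]]] Hr]]; [lra|].
  apply HU; auto. rewrite Rabs_minus_sym; auto.
Qed.

Theorem proposition1p2 (X : Type) (T : topology X) :
  (forall W : (X -> R) -> Prop, fine_open T W <-> graph_open T W) <->
  (forall eps : X -> R, lsc T eps -> (forall x, 0 < eps x < 1) ->
     exists eta : X -> R, continuous T eta /\ (forall x, 0 < eta x < 1) /\
       forall x, eta x <= eps x).
Proof.
  split.
  - intros H1 eps Hl Hr.
    set (W := fun g : X -> R => forall x, Rabs (g x) < eps x).
    assert (Hg : graph_open T W).
    { intros f Hf Wf. exists (fun x s => Rabs s < eps x). split; [|split; auto].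
      intros x t Ht. set (d := eps x - Rabs t).
      exists (fun y => Rabs t + d/2 < eps y), (d/2).
      split; [apply Hl|]. split; [unfold d; lra|]. split; [unfold d; lra|].
      intros y s Hy Hs. rabs. }
    assert (W0 : W (fun _ => 0)). { intro x. rewrite Rabs_R0. apply Hr. }
    destruct (proj2 (H1 W) Hg (fun _ => 0) (cont_const T 0) W0)
      as [h [eta [Hh [He [Hb [_ HB]]]]]].
    exists (fun x => /2 * eta x). split; [apply cont_scal; auto|].
    split. { intro x. specialize (Hb x). lra. }
    intro x.
    assert (A1 : W (fun y => h y + /2 * eta y)).
    { apply HB. apply cont_plus; [|apply cont_scal]; auto.
      intro y. specialize (Hb y). rabs. }
    assert (A2 : W (fun y => h y + -/2 * eta y)).
    { apply HB. apply cont_plus; [|apply cont_scal]; auto.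
      intro y. specialize (Hb y). rabs. }
    specialize (A1 x). specialize (A2 x). specialize (Hb x). simpl in *. rabs.
  - intros H2 W. split; [apply fine_graph | apply graph_fine; auto].
Qed.
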